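(* Let $\mathcal{X}$ be a finite alphabet with orthonormal basis $\{|x\rangle\}_{x\in\mathcal{X}}$ of the classical system $X$, and let $E$ be a quantum system. Let $\rho=\sum_{x\in\mathcal{X}}P(x)|x\rangle\langle x|\otimes\omega(x)$ and $\rho_*=\sum_{x\in\mathcal{X}}P_*(x)|x\rangle\langle x|\otimes\omega_*(x)$ be classical-quantum states, where $P,P_*$ are probability distributions on $\mathcal{X}$ and $\omega(x),\omega_*(x)$ are density operators on $E$. Let $S\subseteq\mathcal{X}$, $\Pi=\sum_{x\in S}|x\rangle\langle x|$ (acting on $X$, tensored with the identity on $E$), $p=\mathrm{tr}\,\Pi\rho\Pi$, $p_*=\mathrm{tr}\,\Pi\rho_*\Pi$, and define the projected states $\tau=p^{-1}\Pi\rho\Pi$ and $\tau_*=p_*^{-1}\Pi\rho_*\Pi$ (with $p,p_*>0$). Let $\epsilon>0$. If $D(\rho,\rho_* )\le p\,\frac{\epsilon^2}{4}$, then $|p-p_*|\le p\,\frac{\epsilon^2}{2}$ and $D(\tau,\tau_* )\le\frac{\epsilon^2}{2}$.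
   Context: For operators $A,B$, the trace distance is $D(A,B)=\frac{1}{2}\mathrm{tr}|A-B|$, where $|O|=\sqrt{O^\dagger O}$. The positivity $p,p_*>0$ is needed for $\tau,\tau_*$ to be defined. *)

(* Defs.v *)
From HB Require Import structures.
From mathcomp Require Import all_boot all_order all_algebra all_field.
From mathcomp Require Import mxtens.
From Stdlib Require Import ClassicalEpsilon.
Set Implicit Arguments. Unset Strict Implicit. Unset Printing Implicit Defensive.
Import Order.TTheory GRing.Theory Num.Theory.
Local Open Scope ring_scope.

Definition adjmx (C : numClosedFieldType) (m n : nat) (A : 'M[C]_(m, n)) : 'M[C]_(n, m) :=
  map_mx Num.conj (A^T).

Definition psdmx (C : numClosedFieldType) (n : nat) (A : 'M[C]_n) : Prop :=
  adjmx A = A /\ forall v : 'rV[C]_n, 0 <= (v *m A *m adjmx v) 0 0.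

Definition densitymx (C : numClosedFieldType) (n : nat) (A : 'M[C]_n) : Prop :=
  psdmx A /\ \tr A = 1.

(* the (unique) positive semidefinite square root of a matrix
   (chosen by classical choice; it exists and is unique for psd A) *)
Definition sqrtmx (C : numClosedFieldType) (n : nat) (A : 'M[C]_n) : 'M[C]_n :=
  epsilon (inhabits 0) (fun B => psdmx B /\ B *m B = A).

Definition absmx (C : numClosedFieldType) (n : nat) (O : 'M[C]_n) : 'M[C]_n :=
  sqrtmx (adjmx O *m O).

Definition trdist (C : numClosedFieldType) (n : nat) (A B : 'M[C]_n) : C :=
  \tr (absmx (A - B)) / 2.

Definition probdist (C : numClosedFieldType) (n : nat) (P : 'I_n -> C) : Prop :=
  (forall x, 0 <= P x) /\ \sum_(x < n) P x = 1.

Definition ketbra (C : numClosedFieldType) (n : nat) (x : 'I_n) : 'M[C]_n := delta_mx x x.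

Definition cqstate (C : numClosedFieldType) (n d : nat) (P : 'I_n -> C) (omega : 'I_n -> 'M[C]_d)
  : 'M[C]_(n * d) :=
  \sum_(x < n) P x *: tensmx (ketbra C x) (omega x).

Definition projS (C : numClosedFieldType) (n d : nat) (S : {set 'I_n}) : 'M[C]_(n * d) :=
  tensmx (\sum_(x in S) ketbra C x) (1%:M : 'M[C]_d).

(* Main.v *)
Require Import Defs.
From HB Require Import structures.
From mathcomp Require Import all_boot all_order all_algebra all_field.
From mathcomp Require Import mxtens spectral ring.
From Stdlib Require Import ClassicalEpsilon.
Import Order.TTheory GRing.Theory Num.Theory.
Local Open Scope ring_scope.
Set Implicit Arguments. Unset Strict Implicit. Unset Printing Implicit Defensive.

Section Adj.
Variable C : numClosedFieldType.

Lemma adjmxK m n (A : 'M[C]_(m,n)) : adjmx (adjmx A) = A.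
Proof. by apply/matrixP=> i j; rewrite !mxE conjCK. Qed.

Lemma adjmxM m n p (A : 'M[C]_(m,n)) (B : 'M[C]_(n,p)) :
  adjmx (A *m B) = adjmx B *m adjmx A.
Proof.
apply/matrixP=> i j; rewrite !mxE rmorph_sum; apply: eq_bigr => k _.
by rewrite !mxE rmorphM mulrC.
Qed.

Lemma adjmxD m n (A B : 'M[C]_(m,n)) : adjmx (A + B) = adjmx A + adjmx B.
Proof. by apply/matrixP=> i j; rewrite !mxE rmorphD. Qed.

Lemma adjmxN m n (A : 'M[C]_(m,n)) : adjmx (- A) = - adjmx A.
Proof. by apply/matrixP=> i j; rewrite !mxE rmorphN. Qed.

Lemma adjmxB m n (A B : 'M[C]_(m,n)) : adjmx (A - B) = adjmx A - adjmx B.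
Proof. by rewrite adjmxD adjmxN. Qed.

Lemma adjmx0 m n : adjmx (0 : 'M[C]_(m,n)) = 0.
Proof. by apply/matrixP=> i j; rewrite !mxE rmorph0. Qed.

Lemma adjmxZ m n c (A : 'M[C]_(m,n)) : adjmx (c *: A) = c^* *: adjmx A.
Proof. by apply/matrixP=> i j; rewrite !mxE rmorphM. Qed.

Lemma adjmx1 n : adjmx (1%:M : 'M[C]_n) = 1%:M.
Proof. by apply/matrixP=> i j; rewrite !mxE eq_sym rmorph_nat. Qed.

Lemma adjmx_sum m n I (r : seq I) (P : pred I) (F : I -> 'M[C]_(m,n)) :
  adjmx (\sum_(i <- r | P i) F i) = \sum_(i <- r | P i) adjmx (F i).
Proof. exact: (big_morph _ (@adjmxD m n) (@adjmx0 m n)). Qed.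

Lemma adjmx_diag n (d : 'rV[C]_n) : adjmx (diag_mx d) = diag_mx (map_mx Num.conj d).
Proof.
apply/matrixP=> i j; rewrite !mxE eq_sym; case: eqP => [->|_]; by rewrite ?mulr1n ?mulr0n ?rmorph0.
Qed.

Lemma adjmx_tens m n p q (A : 'M[C]_(m,n)) (B : 'M[C]_(p,q)) :
  adjmx (A *t B) = adjmx A *t adjmx B.
Proof. by apply/matrixP=> i j; rewrite !mxE rmorphM. Qed.

Lemma mxtrace_adj n (A : 'M[C]_n) : \tr (adjmx A) = (\tr A)^*.
Proof. by rewrite /mxtrace rmorph_sum; apply: eq_bigr => i _; rewrite !mxE. Qed.

End Adj.
Section Psd.
Variable C : numClosedFieldType.

Lemma gram_ge0 n (w : 'rV[C]_n) : 0 <= (w *m adjmx w) 0 0.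
Proof.
rewrite !mxE; apply: sumr_ge0 => k _; rewrite !mxE; exact: mul_conjC_ge0.
Qed.

Lemma psd_conj m n (X : 'M[C]_(m,n)) (A : 'M[C]_n) : psdmx A -> psdmx (X *m A *m adjmx X).
Proof.
move=> [hA pA]; split.
  by rewrite !adjmxM adjmxK hA mulmxA.
move=> v; have := pA (v *m X); by rewrite adjmxM !mulmxA.
Qed.

Lemma psd_gram m n (X : 'M[C]_(m,n)) : psdmx (X *m adjmx X).
Proof.
split; first by rewrite adjmxM adjmxK.
move=> v; have := gram_ge0 (v *m X); by rewrite adjmxM !mulmxA.
Qed.

Lemma psdD n (A B : 'M[C]_n) : psdmx A -> psdmx B -> psdmx (A + B).
Proof.
move=> [hA pA] [hB pB]; split; first by rewrite adjmxD hA hB.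
move=> v; rewrite mulmxDr mulmxDl mxE; exact: addr_ge0.
Qed.

Lemma psdZ n c (A : 'M[C]_n) : 0 <= c -> psdmx A -> psdmx (c *: A).
Proof.
move=> c0 [hA pA]; split; first by rewrite adjmxZ hA geC0_conj.
move=> v; rewrite -scalemxAr -scalemxAl mxE; exact: mulr_ge0.
Qed.

Lemma psd_diag n (d : 'rV[C]_n) : (forall i, 0 <= d 0 i) -> psdmx (diag_mx d).
Proof.
move=> d0; split.
  rewrite adjmx_diag; congr diag_mx; apply/matrixP=> i j; rewrite !mxE ord1.
  exact: geC0_conj.
move=> v; rewrite mul_mx_diag !mxE; apply: sumr_ge0 => k _; rewrite !mxE.
by rewrite mulrAC; apply: mulr_ge0 => //; exact: mul_conjC_ge0.
Qed.

Lemma psd_diag_ge0 n (A : 'M[C]_n) i : psdmx A -> 0 <= A i i.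
Proof.
move=> [_ pA]; have := pA (delta_mx 0 i).
have -> : adjmx (delta_mx 0 i : 'rV[C]_n) = delta_mx i 0.
  apply/matrixP=> a b; rewrite !mxE ord1 [_ == 0]eq_sym.
  by case: (_ == _); case: (_ == _); rewrite /= ?rmorph1 ?rmorph0.
by rewrite -rowE -colE !mxE.
Qed.

Lemma psd_tr_ge0 n (A : 'M[C]_n) : psdmx A -> 0 <= \tr A.
Proof. by move=> pA; apply: sumr_ge0 => i _; exact: psd_diag_ge0. Qed.

End Psd.
Section Spec.
Variable C : numClosedFieldType.

Lemma spec_unit n (A : 'M[C]_n) : spectralmx A *m adjmx (spectralmx A) = 1%:M.
Proof. by have /unitarymxP := spectral_unitarymx A. Qed.

Lemma spec_unit' n (A : 'M[C]_n) : adjmx (spectralmx A) *m spectralmx A = 1%:M.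
Proof.
rewrite /adjmx -invmx_unitary ?spectral_unitarymx //.
by rewrite mulVmx // spectral_unit.
Qed.

Lemma spec_decomp n (A : 'M[C]_n) : adjmx A = A ->
  A = adjmx (spectralmx A) *m diag_mx (spectral_diag A) *m spectralmx A.
Proof.
move=> hA; have : A \is normalmx.
  apply/eqP; change (A *m adjmx A = adjmx A *m A); by rewrite hA.
move/orthomx_spectralP => {1}->.
by rewrite invmx_unitary // spectral_unitarymx.
Qed.

Lemma spec_diagE n (A : 'M[C]_n) : adjmx A = A ->
  diag_mx (spectral_diag A) = spectralmx A *m A *m adjmx (spectralmx A).
Proof.
move=> hA; have E := spec_decomp hA.
set U := spectralmx A in E *; set D := diag_mx _ in E *.
rewrite [in RHS]E.
by rewrite !mulmxA spec_unit mul1mx -!mulmxA spec_unit mulmx1.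
Qed.

Lemma spec_psd_ge0 n (A : 'M[C]_n) i : psdmx A -> 0 <= spectral_diag A 0 i.
Proof.
move=> pA; have := psd_diag_ge0 i (psd_conj (spectralmx A) pA).
by rewrite -spec_diagE ?mxE ?eqxx ?mulr1n //; case: pA.
Qed.

Lemma spec_real n (A : 'M[C]_n) i : adjmx A = A -> spectral_diag A 0 i \is Num.real.
Proof.
move=> hA; apply/CrealP.
have h : adjmx (diag_mx (spectral_diag A)) = diag_mx (spectral_diag A).
  by rewrite spec_diagE // !adjmxM adjmxK hA mulmxA.
have /matrixP /(_ i i) := h.
by rewrite !mxE eqxx !mulr1n.
Qed.

Lemma sqrtmx_exists n (A : 'M[C]_n) : psdmx A -> exists B, psdmx B /\ B *m B = A.
Proof.
move=> pA; set U := spectralmx A; set d := spectral_diag A.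
set e : 'rV[C]_n := \row_j sqrtC (d 0 j).
exists (adjmx U *m diag_mx e *m U); split.
  have := psd_conj (adjmx U) (psd_diag (_ : forall i, 0 <= e 0 i)).
  rewrite adjmxK; apply => i; rewrite mxE sqrtC_ge0; exact: spec_psd_ge0.
have E := spec_decomp (proj1 pA); rewrite -/U -/d in E.
rewrite [in RHS]E.
rewrite -!mulmxA [U *m (adjmx U *m _)]mulmxA spec_unit mul1mx.
rewrite [diag_mx e *m (_ *m _)]mulmxA mulmx_diag; congr (_ *m (_ *m _)); congr diag_mx.
by apply/matrixP=> i j; rewrite !mxE [i]ord1 -expr2 sqrtCK.
Qed.

Lemma sqrtmx_spec n (A : 'M[C]_n) : psdmx A -> psdmx (sqrtmx A) /\ sqrtmx A *m sqrtmx A = A.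
Proof.
move=> pA; rewrite /sqrtmx; apply: (epsilon_spec (inhabits 0) (fun B => psdmx B /\ B *m B = A)).
exact: sqrtmx_exists.
Qed.

End Spec.
Section Comm.
Variable C : numClosedFieldType.

Lemma conj_comm_fwd n (U X M : 'M[C]_n) :
  U *m adjmx U = 1%:M -> X *m (adjmx U *m M *m U) = (adjmx U *m M *m U) *m X ->
  (U *m X *m adjmx U) *m M = M *m (U *m X *m adjmx U).
Proof.
move=> hU h.
have := congr1 (fun Y => U *m Y *m adjmx U) h => /=.
rewrite !mulmxA hU mul1mx -!mulmxA hU mulmx1 => ->.
by [].
Qed.

Lemma conj_comm_bwd n (U X M : 'M[C]_n) :
  adjmx U *m U = 1%:M -> 
  (U *m X *m adjmx U) *m M = M *m (U *m X *m adjmx U) ->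
  X *m (adjmx U *m M *m U) = (adjmx U *m M *m U) *m X.
Proof.
move=> hU h.
have := congr1 (fun Y => adjmx U *m Y *m U) h => /=.
rewrite !mulmxA hU mul1mx -[_ *m adjmx U *m U]mulmxA hU mulmx1 => ->.
by [].
Qed.

Lemma comm_sqrt n (B X : 'M[C]_n) : psdmx B ->
  X *m (B *m B) = (B *m B) *m X -> X *m B = B *m X.
Proof.
move=> pB h.
have E := spec_decomp (proj1 pB).
set U := spectralmx B in E; set e := spectral_diag B in E.
have e0 : forall i, 0 <= e 0 i by move=> i; exact: spec_psd_ge0.
have hU : U *m adjmx U = 1%:M by exact: spec_unit.
have hU' : adjmx U *m U = 1%:M by exact: spec_unit'.
have BB : B *m B = adjmx U *m diag_mx (\row_j (e 0 j * e 0 j)) *m U.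
  rewrite E -mulmx_diag.
  by rewrite !mulmxA -[adjmx U *m _ *m U *m adjmx U]mulmxA hU mulmx1.
rewrite BB in h.
have h2 := conj_comm_fwd hU h.
move eqX: (U *m X *m adjmx U) h2 => X' h2.
have h3 : X' *m diag_mx e = diag_mx e *m X'.
  apply/matrixP => i j; move/matrixP: h2 => /(_ i j).
  rewrite !mul_mx_diag !mul_diag_mx !mxE.
  have [->|nz] := eqVneq (X' i j) 0; first by move=> _; rewrite mul0r mulr0.
  move=> eq; have : e 0 j * e 0 j = e 0 i * e 0 i.
    by apply: (mulfI nz); rewrite eq mulrC.
  rewrite -!expr2 => /eqP; rewrite eqrXn2 // => /eqP ->.
  by rewrite mulrC.
rewrite -eqX in h3; have := conj_comm_bwd hU' h3.
by rewrite -E.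
Qed.

End Comm.
Section Pos.
Variable C : numClosedFieldType.

Lemma psd_annih n (P Q : 'M[C]_n) : adjmx P = P -> P *m Q = 0 -> psdmx (P + Q) -> psdmx P.
Proof.
move=> hP PQ pPQ.
have E := spec_decomp hP.
set U := spectralmx P in E; set d := spectral_diag P in E.
have hU : U *m adjmx U = 1%:M by exact: spec_unit.
have UP : U *m P = diag_mx d *m U.
  by rewrite [in LHS]E !mulmxA hU mul1mx.
have DUQ : diag_mx d *m (U *m Q) = 0 by rewrite mulmxA -UP -mulmxA PQ mulmx0.
have UPU : U *m P *m adjmx U = diag_mx d by rewrite UP -mulmxA hU mulmx1.
have d0 : forall i, 0 <= d 0 i.
  move=> i; have [->|nz] := eqVneq (d 0 i) 0; first exact: lexx.
  have := psd_diag_ge0 i (psd_conj U pPQ).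
  rewrite mulmxDr mulmxDl UPU mxE [diag_mx d i i]mxE eqxx mulr1n.
  suff -> : (U *m Q *m adjmx U) i i = 0 by rewrite addr0.
  rewrite mxE big1 // => k _.
  move/matrixP: DUQ => /(_ i k); rewrite mul_diag_mx !mxE => /eqP.
  by rewrite mulf_eq0 (negPf nz) /= => /eqP ->; rewrite mul0r.
rewrite E; have := psd_conj (adjmx U) (psd_diag d0); by rewrite adjmxK.
Qed.

Lemma psd_BpmH n (B H : 'M[C]_n) : adjmx H = H -> psdmx B -> B *m B = H *m H ->
  psdmx (B + H) /\ psdmx (B - H).
Proof.
move=> hH pB BB.
have cHB : H *m B = B *m H by apply: comm_sqrt => //; rewrite BB mulmxA.
have hB := proj1 pB.
have pBB : psdmx (B + B) by exact: psdD.
split.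
  apply: (@psd_annih _ _ (B - H)).
  - by rewrite adjmxD hB hH.
  - by rewrite mulmxDl !mulmxBr BB cHB addrA subrK subrr.
  - by rewrite addrACA subrr addr0.
apply: (@psd_annih _ _ (B + H)).
- by rewrite adjmxB hB hH.
- by rewrite mulmxBl !mulmxDr BB cHB opprD addrA addrK subrr.
- by rewrite addrACA addNr addr0.
Qed.

Lemma tr_psd_mul n (X Y : 'M[C]_n) : psdmx X -> psdmx Y -> 0 <= \tr (X *m Y).
Proof.
move=> pX pY.
have E := spec_decomp (proj1 pY).
set U := spectralmx Y in E; set d := spectral_diag Y in E.
have d0 : forall i, 0 <= d 0 i by move=> i; exact: spec_psd_ge0.
rewrite E !mulmxA mxtrace_mulC !mulmxA.
rewrite mul_mx_diag /mxtrace; apply: sumr_ge0 => i _; rewrite mxE.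
apply: mulr_ge0 => //; exact: (psd_diag_ge0 i (psd_conj U pX)).
Qed.

End Pos.
Section TrNorm.
Variable C : numClosedFieldType.

Lemma mxtraceN n (A : 'M[C]_n) : \tr (- A) = - \tr A.
Proof. by rewrite /mxtrace -sumrN; apply: eq_bigr => i _; rewrite mxE. Qed.

Lemma mxtraceB n (A B : 'M[C]_n) : \tr (A - B) = \tr A - \tr B.
Proof. by rewrite mxtraceD mxtraceN. Qed.

Lemma trnorm_lower n (H B S : 'M[C]_n) : adjmx H = H -> psdmx B -> B *m B = H *m H ->
  psdmx (1%:M - S) -> psdmx (1%:M + S) -> \tr (S *m H) <= \tr B.
Proof.
move=> hH pB BB pS1 pS2.
have [p1 p2] := psd_BpmH hH pB BB.
have t1 := tr_psd_mul pS1 p1; have t2 := tr_psd_mul pS2 p2.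
rewrite ?mulmxBl ?mulmxDl !mul1mx ?mulmxDr ?mulmxBr ?mulmxN !(mxtraceD, mxtraceN, opprD) in t1 t2.
have := addr_ge0 t1 t2.
set x := \tr (S *m H); set y := \tr (S *m B).
have -> : \tr B + \tr H + (- y - x) + (\tr B - \tr H + (y - x)) = (\tr B - x) *+ 2.
  by rewrite -mulr_natr; ring.
by rewrite pmulrn_lge0 // subr_ge0.
Qed.

Lemma trnorm_upper n (H B : 'M[C]_n) : adjmx H = H -> psdmx B -> B *m B = H *m H ->
  exists S, [/\ psdmx (1%:M - S), psdmx (1%:M + S) & \tr B <= \tr (S *m H)].
Proof.
move=> hH pB BB.
have E := spec_decomp hH.
set U := spectralmx H in E; set d := spectral_diag H in E.
have hU : U *m adjmx U = 1%:M by exact: spec_unit.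
have hU' : adjmx U *m U = 1%:M by exact: spec_unit'.
have dr : forall i, d 0 i \is Num.real by move=> i; exact: spec_real.
set s : 'rV[C]_n := \row_i (if 0 <= d 0 i then 1 else -1).
exists (adjmx U *m diag_mx s *m U); split.
- have -> : 1%:M - adjmx U *m diag_mx s *m U = adjmx U *m diag_mx (\row_i (1 - s 0 i)) *m U.
    have -> : diag_mx (\row_i (1 - s 0 i)) = 1%:M - diag_mx s.
      by apply/matrixP => i j; rewrite !mxE; case: eqP => _; rewrite ?mulr1n ?mulr0n ?subrr.
    by rewrite mulmxBr mulmxBl mulmx1 hU'.
  have := psd_conj (adjmx U) (psd_diag (_ : forall i, 0 <= (\row_i (1 - s 0 i)) 0 i)).
  rewrite adjmxK; apply => i; rewrite !mxE; case: ifP => _; first by rewrite subrr.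
  by rewrite opprK addr_ge0 ?ler01.
- have -> : 1%:M + adjmx U *m diag_mx s *m U = adjmx U *m diag_mx (\row_i (1 + s 0 i)) *m U.
    have -> : diag_mx (\row_i (1 + s 0 i)) = 1%:M + diag_mx s.
      by apply/matrixP => i j; rewrite !mxE; case: eqP => _; rewrite ?mulr1n ?mulr0n ?addr0.
    by rewrite mulmxDr mulmxDl mulmx1 hU'.
  have := psd_conj (adjmx U) (psd_diag (_ : forall i, 0 <= (\row_i (1 + s 0 i)) 0 i)).
  rewrite adjmxK; apply => i; rewrite !mxE; case: ifP => _; last by rewrite subrr.
  by rewrite addr_ge0 ?ler01.
set B' := U *m B *m adjmx U.
have pB' : psdmx B' by exact: psd_conj.
have trB : \tr B = \tr B' by rewrite /B' mxtrace_mulC mulmxA hU' mul1mx.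
have conjM : forall X Y : 'M[C]_n, (U *m X *m adjmx U) *m (U *m Y *m adjmx U) = U *m (X *m Y) *m adjmx U.
  move=> X Y; rewrite !mulmxA -[U *m X *m adjmx U *m U]mulmxA hU' mulmx1.
  by [].
have B'B' : B' *m B' = diag_mx (\row_i (d 0 i * d 0 i)).
  rewrite /B' conjM BB -conjM -spec_diagE //.
  by rewrite mulmx_diag.
have trSH : \tr (adjmx U *m diag_mx s *m U *m H) = \sum_i `|d 0 i|.
  rewrite E !mulmxA -[adjmx U *m diag_mx s *m U *m adjmx U]mulmxA hU mulmx1.
  rewrite mxtrace_mulC !mulmxA hU mul1mx mulmx_diag /mxtrace.
  apply: eq_bigr => i _; rewrite !mxE eqxx mulr1n.
  case: ifP => h; first by rewrite mul1r ger0_norm.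
  rewrite mulN1r ltr0_norm // real_ltNge ?h //.
rewrite trB trSH /mxtrace; apply: ler_sum => i _.
have Bii0 := psd_diag_ge0 i pB'.
rewrite -(ler_sqr (x:=B' i i)) ?nnegrE //.
rewrite (real_normK (dr i)) !expr2.
have : (B' *m B') i i = d 0 i * d 0 i by rewrite B'B' !mxE eqxx mulr1n.
  rewrite mxE (bigD1 i) //= => <-.
  rewrite lerDl.
  apply: sumr_ge0 => k _.
  have -> : B' k i = (B' i k)^*.
    by rewrite -{1}(proj1 pB') !mxE.
  exact: mul_conjC_ge0.
Qed.

End TrNorm.
Section CQ.
Variable C : numClosedFieldType.

Lemma psd0 n : psdmx (0 : 'M[C]_n).
Proof. by split; [rewrite adjmx0 | move=> v; rewrite mulmx0 mul0mx mxE]. Qed.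

Lemma psd_sum n I (r : seq I) (P : pred I) (F : I -> 'M[C]_n) :
  (forall i, P i -> psdmx (F i)) -> psdmx (\sum_(i <- r | P i) F i).
Proof. move=> h; apply: big_ind => //; [exact: psd0 | exact: psdD]. Qed.

Lemma adj_delta m n (i : 'I_m) (j : 'I_n) : adjmx (delta_mx i j : 'M[C]_(m,n)) = delta_mx j i.
Proof.
apply/matrixP=> a b; rewrite !mxE.
by case: (a == j); case: (b == i); rewrite /= ?rmorph1 ?rmorph0.
Qed.

Lemma tr_delta n (x : 'I_n) : \tr (delta_mx x x : 'M[C]_n) = 1.
Proof.
rewrite /mxtrace (bigD1 x) //= mxE !eqxx /= big1 ?addr0 // => k nk.
by rewrite mxE (negPf nk).
Qed.

Lemma tr_tens m n (A : 'M[C]_m) (B : 'M[C]_n) : \tr (A *t B) = \tr A * \tr B.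
Proof. by rewrite /mxtrace mulr_sum; apply: eq_bigr => k _; rewrite mxE. Qed.

Lemma mxtrace_sum n I (r : seq I) (P : pred I) (F : I -> 'M[C]_n) :
  \tr (\sum_(i <- r | P i) F i) = \sum_(i <- r | P i) \tr (F i).
Proof. exact: (big_morph _ (@mxtraceD _ n) (@mxtrace0 _ n)). Qed.

Lemma psd_tens_delta n d (x : 'I_n) (W : 'M[C]_d) : psdmx W -> psdmx (ketbra C x *t W).
Proof.
move=> pW; have [R [pR RR]] := sqrtmx_exists pW.
have -> : ketbra C x *t W = (ketbra C x *t R) *m adjmx (ketbra C x *t R).
  by rewrite adjmx_tens tensmx_mul /ketbra adj_delta mul_delta_mx (proj1 pR) RR.
exact: psd_gram.
Qed.

Lemma cq_psd n d (P : 'I_n -> C) (om : 'I_n -> 'M[C]_d) :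
  (forall x, 0 <= P x) -> (forall x, psdmx (om x)) -> psdmx (cqstate P om).
Proof.
move=> P0 pom; apply: psd_sum => x _; apply: psdZ => //; exact: psd_tens_delta.
Qed.

Lemma cq_tr n d (P : 'I_n -> C) (om : 'I_n -> 'M[C]_d) :
  probdist P -> (forall x, densitymx (om x)) -> \tr (cqstate P om) = 1.
Proof.
move=> [_ P1] dom; rewrite /cqstate mxtrace_sum -[RHS]P1; apply: eq_bigr => x _.
by rewrite mxtraceZ tr_tens tr_delta (proj2 (dom x)) !mulr1.
Qed.

Definition kvec n (S : {set 'I_n}) : 'rV[C]_n := \row_i (i \in S)%:R.

Lemma K_diag n (S : {set 'I_n}) : \sum_(x in S) ketbra C x = diag_mx (kvec S).
Proof.
apply/matrixP=> i j; rewrite summxE !mxE.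
have [iS|niS] := boolP (i \in S).
  rewrite (bigD1 i) //= mxE eqxx /= big1 ?addr0; first by rewrite eq_sym; case: eqP.
  by move=> k /andP [_ nk]; rewrite mxE eq_sym (negPf nk).
rewrite mul0rn big1 //.
by move=> k kS; rewrite mxE; case: eqP => // ik; rewrite ik kS in niS.
Qed.

Lemma proj_herm n d (S : {set 'I_n}) : adjmx (projS C d S) = projS C d S.
Proof.
rewrite /projS adjmx_tens adjmx1 K_diag adjmx_diag; congr (diag_mx _ *t _).
by apply/matrixP=> i j; rewrite !mxE; case: (_ \in _); rewrite /= ?rmorph1 ?rmorph0.
Qed.

Lemma proj_idem n d (S : {set 'I_n}) : projS C d S *m projS C d S = projS C d S.
Proof.
rewrite /projS tensmx_mul mulmx1 K_diag mulmx_diag; congr (diag_mx _ *t _).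
by apply/matrixP=> i j; rewrite !mxE; case: (_ \in _); rewrite /= ?mulr1 ?mulr0.
Qed.

End CQ.
Unset Implicit Arguments.
Theorem lemma3 (C : numClosedFieldType) (n d : nat) (P Ps : 'I_n -> C)
  (omega omegas : 'I_n -> 'M[C]_d) (S : {set 'I_n}) (eps : C) :
  probdist P -> probdist Ps ->
  (forall x, densitymx (omega x)) -> (forall x, densitymx (omegas x)) ->
  let rho := cqstate P omega in
  let rhos := cqstate Ps omegas in
  let Pi := projS C d S in
  let p := \tr (Pi *m rho *m Pi) in
  let ps := \tr (Pi *m rhos *m Pi) in
  let tau := p^-1 *: (Pi *m rho *m Pi) in
  let taus := ps^-1 *: (Pi *m rhos *m Pi) in
  0 < p -> 0 < ps -> 0 < eps ->
  trdist rho rhos <= p * (eps ^+ 2 / 4) ->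
  `|p - ps| <= p * (eps ^+ 2 / 2) /\ trdist tau taus <= eps ^+ 2 / 2.
Proof.
move=> hP hPs hom homs rho rhos Pi p ps tau taus p0 ps0 eps0 hD.
have prho : psdmx rho.
  apply: cq_psd; [exact: (proj1 hP) | by move=> x; case: (hom x)].
have prhos : psdmx rhos.
  apply: cq_psd; [exact: (proj1 hPs) | by move=> x; case: (homs x)].
have trrho : \tr rho = 1 by apply: cq_tr.
have trrhos : \tr rhos = 1 by apply: cq_tr.
have hPi : adjmx Pi = Pi by exact: proj_herm.
have PiPi : Pi *m Pi = Pi by exact: proj_idem.
set H := rho - rhos.
have hH : adjmx H = H by rewrite adjmxB (proj1 prho) (proj1 prhos).
have trH : \tr H = 0 by rewrite mxtraceB trrho trrhos subrr.
have pHH : psdmx (adjmx H *m H) by have := psd_gram H; rewrite !hH.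
have [pB BB] := sqrtmx_spec pHH.
set B := sqrtmx (adjmx H *m H) in pB BB.
rewrite hH in BB.
have DE : trdist rho rhos = \tr B / 2 by [].
have pPi : psdmx Pi by rewrite -{1}PiPi -{2}hPi; exact: psd_gram.
have h1Pi : adjmx (1%:M - Pi) = 1%:M - Pi by rewrite adjmxB adjmx1 hPi.
have p1Pi : psdmx (1%:M - Pi).
  have -> : 1%:M - Pi = (1%:M - Pi) *m adjmx (1%:M - Pi).
    by rewrite h1Pi mulmxBl mul1mx mulmxBr mulmx1 PiPi subrr subr0.
  exact: psd_gram.
have trPiH : p - ps = \tr (Pi *m H).
  rewrite /p /ps -mxtraceB -mulmxBl -mulmxBr -/H.
  by rewrite mxtrace_mulC mulmxA PiPi.
have tB0 : 0 <= \tr B by exact: psd_tr_ge0.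
have two0 : (2 : C) != 0 by rewrite pnatr_eq0.
have step1 : `|p - ps| <= \tr B / 2.
  set S1 := Pi - (1%:M - Pi).
  have pS1m : psdmx (1%:M - S1).
    have -> : 1%:M - S1 = (1%:M - Pi) + (1%:M - Pi).
      by apply/matrixP => i j; rewrite !mxE; ring.
    exact: psdD.
  have pS1p : psdmx (1%:M + S1).
    have -> : 1%:M + S1 = Pi + Pi.
      by apply/matrixP => i j; rewrite !mxE; ring.
    exact: psdD.
  have l1 : \tr (S1 *m H) <= \tr B by exact: trnorm_lower hH pB BB pS1m pS1p.
  have l2 : \tr ((- S1) *m H) <= \tr B.
    by apply: trnorm_lower hH pB BB _ _; rewrite ?opprK.
  have e1 : \tr (S1 *m H) = (p - ps) * 2.
    rewrite trPiH /S1 !mulmxBl mul1mx !mxtraceB ?trH ?trrho ?trrhos; ring.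
  have e2 : \tr ((- S1) *m H) = - ((p - ps) * 2) by rewrite mulNmx mxtraceN e1.
  have rp : p - ps \is Num.real by rewrite rpredB ?gtr0_real.
  rewrite real_ler_norml //; apply/andP; split; rewrite -subr_ge0.
    have -> : p - ps - - (\tr B / 2) = (\tr B - \tr ((- S1) *m H)) / 2.
      by rewrite e2; field.
    by rewrite divr_ge0 ?subr_ge0 ?ler0n.
  have -> : \tr B / 2 - (p - ps) = (\tr B - \tr (S1 *m H)) / 2.
    by rewrite e1; field.
  by rewrite divr_ge0 ?subr_ge0 ?ler0n.
have Dle : \tr B / 2 <= p * (eps ^+ 2 / 4) by [].
have e20 : 0 <= eps ^+ 2 by rewrite exprn_ge0 // ltW.
have pn0 : p != 0 by rewrite gt_eqF.
have psn0 : ps != 0 by rewrite gt_eqF.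
split.
  apply: (le_trans step1); apply: (le_trans Dle); apply: ler_wpM2l; first exact: ltW.
  rewrite -subr_ge0; have -> : eps ^+ 2 / 2 - eps ^+ 2 / 4 = eps ^+ 2 / 4.
    by field.
  by rewrite divr_ge0 ?ler0n.
have pX : psdmx (Pi *m rho *m Pi) by have := psd_conj Pi prho; rewrite hPi.
have pY : psdmx (Pi *m rhos *m Pi) by have := psd_conj Pi prhos; rewrite hPi.
set Y := Pi *m rhos *m Pi in pY.
set Ht := tau - taus.
have hHt : adjmx Ht = Ht.
  rewrite /Ht /tau /taus adjmxB !adjmxZ (proj1 pX) (proj1 pY).
  by rewrite !geC0_conj // invr_ge0 ltW.
set c := p^-1 - ps^-1.
have HtE : Ht = p^-1 *: (Pi *m H *m Pi) + c *: Y.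
  rewrite /Ht /tau /taus /H /c /Y mulmxBr mulmxBl scalerBr scalerBl.
  by rewrite addrA subrK.
have pHtt : psdmx (adjmx Ht *m Ht) by have := psd_gram Ht; rewrite !hHt.
have [pBt BBt] := sqrtmx_spec pHtt.
set Bt := sqrtmx (adjmx Ht *m Ht) in pBt BBt.
rewrite hHt in BBt.
have DEt : trdist tau taus = \tr Bt / 2 by [].
have [S0 [pSm pSp up]] := trnorm_upper hHt pBt BBt.
set a := \tr (Pi *m S0 *m Pi *m H).
set b := \tr (S0 *m Y).
have trSH : \tr (S0 *m Ht) = p^-1 * a + c * b.
  rewrite HtE mulmxDr -!scalemxAr mxtraceD !mxtraceZ; congr (_ * _ + _).
  by rewrite /a !mulmxA mxtrace_mulC !mulmxA.
have la : a <= \tr B.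
  apply: trnorm_lower hH pB BB _ _.
    have -> : 1%:M - Pi *m S0 *m Pi = (1%:M - Pi) + Pi *m (1%:M - S0) *m adjmx Pi.
      by rewrite hPi mulmxBr mulmxBl mulmx1 PiPi addrA subrK.
    by apply: psdD => //; exact: psd_conj.
  have -> : 1%:M + Pi *m S0 *m Pi = (1%:M - Pi) + Pi *m (1%:M + S0) *m adjmx Pi.
    by rewrite hPi mulmxDr mulmxDl mulmx1 PiPi addrA subrK.
  by apply: psdD => //; exact: psd_conj.
have lb1 : 0 <= ps - b.
  by have := tr_psd_mul pSm pY; rewrite mulmxBl mul1mx mxtraceB.
have lb2 : 0 <= ps + b.
  by have := tr_psd_mul pSp pY; rewrite mulmxDl mul1mx mxtraceD.
have cps : c * ps = (ps - p) / p by rewrite /c; field; rewrite ?pn0 ?psn0.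
have Nc : `|p - ps| / p = `|c| * ps.
  rewrite -(gtr0_norm ps0) -normrM cps normrM normfV (gtr0_norm p0) distrC.
  by rewrite (gtr0_norm ps0).
have rc : c \is Num.real by rewrite rpredB ?rpredV ?gtr0_real.
have lc : 0 <= `|p - ps| / p - c * b.
  rewrite Nc; case/orP: (real_leVge rc (real0 C)) => hc.
    rewrite (ler0_norm hc).
    have -> : - c * ps - c * b = (- c) * (ps + b) by ring.
    by rewrite mulr_ge0 // oppr_ge0.
  rewrite (ger0_norm hc).
  have -> : c * ps - c * b = c * (ps - b) by ring.
  by rewrite mulr_ge0.
rewrite DEt -subr_ge0.
move: (up); rewrite trSH -subr_ge0 => q1.
move: la; rewrite -subr_ge0 => q2.
move: step1; rewrite -subr_ge0 => q4.
move: Dle; rewrite -subr_ge0 => q5.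
set N := `|p - ps| in lc q4 *.
set e2 := eps ^+ 2 in e20 q5 *.
set tB := \tr B in q2 q4 q5 *.
set tBt := \tr Bt in q1 *.
set cb := c * b in q1 lc *.
have -> : e2 / 2 - tBt / 2 = e2 / 8 + (3%:R * (p * (e2 / 4) - tB / 2) / p + (tB / 2 - N) / p
   + (tB - a) / p + (N / p - cb) + (p^-1 * a + cb - tBt)) / 2.
  by field; rewrite ?pn0.
apply: addr_ge0; first by rewrite divr_ge0 ?ler0n.
apply: divr_ge0; last exact: ler0n.
have ip : 0 <= p^-1 by rewrite invr_ge0 ltW.
have pp : 0 <= p by exact: ltW.
repeat apply: addr_ge0 => //; apply: divr_ge0 => //.
by apply: mulr_ge0 => //; exact: ler0n.
Qed.
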